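(* Let $\alpha\in(0,1)$, let $A=\alpha/\sum_{k=2}^\infty\frac{1}{k(\log k)^2}$, and set $\alpha_1=0$, $\alpha_k=A/[k(\log k)^2]$ for $k>1$ (so $\sum_k\alpha_k=\alpha$). Let $(Z_k)_{k\in\mathbb N}$ be independent with $Z_k\sim N(\mu_k,1)$, where for $k>1$ all hypotheses are non-null with $\mu_k=(\log k)^{-1/c}$ for some fixed $c>2$, and let $p_k=1-\Phi(Z_k)$. Then the online Bonferroni test, which rejects iff there exists $k\in\mathbb N$ with $p_k\le\alpha_k$, has power one, i.e. $\mathbb P(\exists k\in\mathbb N:\ p_k\le\alpha_k)=1$.
   Context: $\Phi$ is the standard Gaussian CDF. *)

(* Defs.v *)
From HB Require Import structures.
From mathcomp Require Import all_boot all_order all_algebra.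
From mathcomp Require Import all_classical all_reals all_analysis.
Set Implicit Arguments. Unset Strict Implicit. Unset Printing Implicit Defensive.
Import Order.TTheory GRing.Theory Num.Theory.
Import numFieldNormedType.Exports.
Local Open Scope classical_set_scope.
Local Open Scope ring_scope.

Definition Phi {R : realType} (x : R) : R :=
  fine (normal_prob 0 1 `]-oo, x]).

Definition mutually_independent d {T : measurableType d} {R : realType}
  (P : probability T R) (X : nat -> {RV P >-> R}) : Prop :=
  forall (J : seq nat) (B : nat -> set R), uniq J ->
    (forall j, j \in J -> measurable (B j)) ->
    P (\bigcap_(j in [set` J]) (X j @^-1` B j)) =
    (\prod_(j <- J) P (X j @^-1` B j))%E.

(* Online Bonferroni levels: alpha_1 = 0, alpha_k = A/(k (log k)^2), k > 1,
   with A = alpha / sum_{k>=2} 1/(k (log k)^2).  (alpha_0 is irrelevant; set to 0.) *)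
Definition bonf_const {R : realType} (alpha : R) : R :=
  alpha / limn (fun n : nat => \sum_(2 <= k < n) (k%:R * (ln (k%:R : R)) ^+ 2)^-1).

Definition bonf_alpha {R : realType} (alpha : R) (k : nat) : R :=
  if (1 < k)%N then bonf_const alpha / (k%:R * (ln (k%:R : R)) ^+ 2) else 0.

Arguments mutually_independent {d T R} P X.

(* Main.v *)
Set Warnings "-all".
Require Import Defs.
From HB Require Import structures.
From mathcomp Require Import all_boot all_order all_algebra.
From mathcomp Require Import all_classical all_reals all_analysis.
Import Order.TTheory GRing.Theory Num.Theory.
Import numFieldNormedType.Exports.
Local Open Scope classical_set_scope.
Local Open Scope ring_scope.
From mathcomp Require Import ring lra measurable_realfun.
Local Open Scope ring_scope.

Lemma pdf1E (R : realType) (m x : R) :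
  normal_pdf m 1 x = normal_peak 1 * expR (- (x - m) ^+ 2 / 2).
Proof.
rewrite normal_pdfE ?oner_neq0 //= /normal_fun expr1n.
done.
Qed.

Lemma tail_ub (R : realType) (t : R) : 0 <= t ->
  (normal_prob 0 1 `]t, +oo[ <= (expR (- t^+2 / 2))%:E)%E.
Proof.
move=> t0.
apply: (@le_trans _ _ (\int[lebesgue_measure]_(x in `]t,+oo[)
   ((expR (- t^+2/2)) * (normal_pdf t 1 x))%:E)%E).
  apply: ge0_le_integral => //.
  - by move=> x _; rewrite lee_fin normal_pdf_ge0.
  - apply: measurable_funTS; apply/measurable_EFinP; exact: measurable_normal_pdf.
  - apply: measurable_funTS; apply/measurable_EFinP.
    apply: measurable_funM => //; exact: measurable_normal_pdf.
  - move=> x /=; rewrite in_itv /= andbT => tx.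
    rewrite lee_fin !pdf1E mulrCA ler_pM2l; last first.
      by apply: normal_peak_gt0; rewrite oner_neq0.
    rewrite -expRD ler_expR subr0.
    have : 0 <= t * (x - t) by apply: mulr_ge0 => //; lra.
    nra.
under eq_integral do rewrite EFinM.
rewrite ge0_integralZl //; last 2 first.
- apply: measurable_funTS; apply/measurable_EFinP; exact: measurable_normal_pdf.
- by move=> x _; rewrite lee_fin normal_pdf_ge0.
rewrite -[X in (_ <= X)%E]mule1.
apply: lee_wpmul2l; first by rewrite lee_fin expR_ge0.
exact: (probability_le1 (normal_prob t 1)).
Qed.

Lemma prob_fin d (T : measurableType d) (R : realType) (Q : probability T R) (A : set T) :
  measurable A -> Q A \is a fin_num.
Proof.
move=> mA; rewrite ge0_fin_numE ?measure_ge0 //.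
exact: (le_lt_trans (probability_le1 Q mA) (ltry 1)).
Qed.

Lemma Phi_mono (R : realType) (x y : R) : x <= y -> Phi x <= Phi y.
Proof.
move=> xy; rewrite /Phi; apply: fine_le; try exact: prob_fin.
apply: le_measure; rewrite ?inE //.
by move=> z /=; rewrite !in_itv /= => zx; apply: le_trans zx xy.
Qed.

Lemma Phi_nd (R : realType) : {homo (@Phi R) : x y / x <= y}.
Proof. by move=> x y; apply: Phi_mono. Qed.

Lemma Phi_lb (R : realType) (t : R) : 0 <= t -> 1 - expR (- t^+2/2) <= Phi t.
Proof.
move=> t0; rewrite /Phi -setCitvr probability_setC //.
have hf := @prob_fin _ _ _ (normal_prob 0 1) _ (measurable_itv `]t, +oo[).
have h := @tail_ub R t t0.
rewrite -(fineK hf) in h *.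
rewrite lee_fin in h.
rewrite fineB //=; lra.
Qed.

Lemma normal_lb (R : realType) (m t d : R) : m <= t -> 0 < d ->
  ((d * normal_pdf m 1 (t + d))%:E <= normal_prob m 1 `[t, +oo[)%E.
Proof.
move=> mt d0.
apply: (@le_trans _ _ (normal_prob m 1 `[t, t + d])); last first.
  apply: le_measure; rewrite ?inE //.
  by move=> z /=; rewrite !in_itv /= => /andP[-> _].
rewrite /normal_prob.
have H : (\int[lebesgue_measure]_(x in `[t, (t + d)%R]) cst ((normal_pdf m 1 (t + d))%:E) x
   = (d * normal_pdf m 1 (t + d))%:E)%E.
  rewrite integral_cst //=; rewrite lebesgue_measure_itv /= lte_fin ltrDl d0 -EFinB -EFinM.
  by congr EFin; ring.
rewrite -H.
apply: ge0_le_integral => //.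
- by move=> x _; rewrite lee_fin normal_pdf_ge0.
- apply: measurable_funTS; apply/measurable_EFinP; exact: measurable_normal_pdf.
- move=> x /=; rewrite in_itv /= => /andP[tx xt].
  rewrite lee_fin !pdf1E ler_pM2l; last first.
    by apply: normal_peak_gt0; rewrite oner_neq0.
  rewrite ler_expR !mulNr lerN2 ler_pM2r ?invr_gt0 //.
  have h1 : 0 <= x - m by lra.
  have h2 : x - m <= t + d - m by lra.
  nra.
Qed.

Lemma tele_step (R : realType) (x : R) : 2 <= x ->
  ((x + 1) * ln (x + 1) ^+ 2)^-1 <= (ln x)^-1 - (ln (x + 1))^-1.
Proof.
move=> x2.
have x0 : 0 < x by lra.
have y0 : 0 < x + 1 by lra.
have a0 : 0 < ln x by apply: ln_gt0; lra.
have ab : ln x <= ln (x + 1) by rewrite ler_ln ?posrE //; lra.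
have b0 : 0 < ln (x + 1) by apply: (Order.POrderTheory.lt_le_trans a0 ab).
have hd : ln x - ln (x + 1) <= - (x + 1)^-1.
  rewrite -ln_div ?posrE //.
  have -> : x / (x + 1) = 1 + - (x + 1)^-1 by field; lra.
  apply: le_ln1Dx.
  rewrite ltrN2 invf_lt1 //; lra.
have hy : 1 <= (ln (x + 1) - ln x) * (x + 1).
  have : (x + 1)^-1 <= ln (x + 1) - ln x by lra.
  by rewrite -ler_pdivrMr // div1r.
set a := ln x in a0 ab hd hy *; set b := ln (x + 1) in ab b0 hd hy *.
set y := x + 1 in y0 hd hy *.
have -> : a^-1 - b^-1 = (b - a) / (a * b) by field; apply/andP; split; lra.
rewrite ler_pdivlMr ?mulr_gt0 //.
rewrite mulrC ler_pdivrMr ?mulr_gt0 ?exprn_gt0 //.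
have h1 : 0 <= ((b - a) * y - 1) * b ^+ 2 by apply: mulr_ge0; [lra | exact: sqr_ge0].
have h2 : 0 <= (b - a) * b by apply: mulr_ge0; lra.
nra.
Qed.

Lemma bonf_const_gt0 (R : realType) (alpha : R) : 0 < alpha -> 0 < bonf_const alpha.
Proof.
move=> a0; rewrite /bonf_const.
set F := fun k : nat => ((k%:R : R) * ln (k%:R : R) ^+ 2)^-1.
set u := (fun n : nat => \sum_(2 <= k < n) F k).
have F0 : forall k, 0 <= F k.
  by move=> k; rewrite /F invr_ge0 mulr_ge0 // sqr_ge0.
have us : forall n, u n <= u n.+1.
  move=> n; rewrite /u; case: (leqP 2 n) => n2.
    by rewrite big_nat_recr //= lerDl.
  by rewrite !big_geq // ltnW.
have ui := (nondecreasing_seqP u).1 us.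
have l2 : 0 < ln (2 : R) by apply: ln_gt0; lra.
have ub : forall j, u (j + 3)%N <= F 2 + (ln (2:R))^-1 - (ln ((j + 2)%:R : R))^-1.
  elim=> [|j IH].
    by rewrite /u add0n big_nat1 /= addrK.
  have -> : (j.+1 + 3 = (j + 3).+1)%N by rewrite addSn.
  rewrite /u big_nat_recr /=; last by rewrite addn3.
  rewrite -/(u (j + 3)%N).
  have ts := @tele_step R ((j + 2)%:R).
  have h2 : (2 : R) <= (j + 2)%:R by rewrite natrD lerDr ler0n.
  have e1 : ((j + 2)%:R + 1 : R) = (j + 3)%:R by rewrite (_ : (j + 3 = j + 2 + 1)%N) ?natrD // -addnA.
  have e2 : ((j.+1 + 2)%:R : R) = (j + 3)%:R by rewrite addSn -addnS.
  move: (ts h2); rewrite e1 e2 /F => h.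
  rewrite /F in IH; lra.
have B : has_ubound (range u).
  exists (F 2 + (ln (2:R))^-1) => y [n _ <-].
  have gi : forall j : nat, 0 <= (ln ((j + 2)%:R : R))^-1.
    move=> j; rewrite invr_ge0; apply: ln_ge0; rewrite natrD; have := ler0n R j; lra.
  case: (leqP n 3) => n3.
    apply: (le_trans (ui _ _ n3)); have := ub 0%N; have := gi 0%N; lra.
  have -> : n = (n - 3 + 3)%N by rewrite subnK // ltnW.
  have := ub (n - 3)%N; have := gi (n - 3)%N; lra.
have cu : cvgn u := cvgP _ (nondecreasing_cvgn ui B).
apply: divr_gt0 => //.
apply: (lt_le_trans _ (nondecreasing_cvgn_le ui cu 3)).
rewrite /u big_nat1 /F invr_gt0 mulr_gt0 //.
by rewrite exprn_gt0.
Qed.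

Lemma core (R : realType) (A c L : R) : 0 < A -> 2 < c -> 1 <= L -> A <= L ->
  1 - ln A <= L ->
  (6 / (2^-1 - c^-1)) `^ ((2^-1 - c^-1) / 2)^-1 <= L ->
  exists t, [/\ 1 <= t, L `^ (- c^-1) <= t,
    expR (- t ^+ 2 / 2) = A / (expR L * L ^+ 2) &
    normal_peak 1 * expR (-2) * A / 2 / expR L <=
      t^-1 * normal_pdf (L `^ (- c^-1)) 1 (t + t^-1)].
Proof.
move=> A0 c2 L1 AL lnAL LM.
have L0 : 0 < L by lra.
have c0 : 0 < c by lra.
set beta := 2^-1 - c^-1.
have cinv : c^-1 < 2^-1 by rewrite ltf_pV2 ?posrE //; lra.
have b0 : 0 < beta by rewrite /beta; lra.
set eps := beta / 2.
have e0 : 0 < eps by rewrite /eps; lra.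
set M := 6 / beta.
have M0 : 0 < M by rewrite /M divr_gt0.
set w := L + ln (L ^+ 2 / A).
have LA : 1 <= L ^+ 2 / A.
  by rewrite ler_pdivlMr // mul1r; nra.
have wL : L <= w by rewrite /w lerDl ln_ge0.
set t := Num.sqrt (2 * w).
have t0 : 0 <= t by exact: sqrtr_ge0.
have t2 : t ^+ 2 = 2 * w by rewrite sqr_sqrtr //; lra.
have t1 : 1 <= t by nra.
have lnL2 : ln (L ^+ 2) <= L ^+ 2 - 1.
  have h := @le_ln1Dx R (L ^+ 2 - 1).
  rewrite (_ : 1 + (L ^+ 2 - 1) = L ^+ 2) in h; last by ring.
  apply: h; nra.
have wu : w <= 2 * L ^+ 2.
  rewrite /w ln_div ?posrE ?exprn_gt0 //; have := sqr_ge0 (L - 1); nra.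
have tL : t <= 2 * L by nra.
have texp : expR (- t ^+ 2 / 2) = A / (expR L * L ^+ 2).
  rewrite t2 (_ : - (2 * w) / 2 = - L + - ln (L ^+ 2 / A)); last by rewrite /w; field.
  rewrite expRD !expRN lnK ?posrE ?divr_gt0 ?exprn_gt0 //.
  by field; rewrite !gt_eqF ?expR_gt0.
set mu := L `^ (- c^-1).
have mu0 : 0 < mu by apply: powR_gt0.
have mu1 : mu <= 1.
  rewrite /mu powRN invf_le1 ?powR_gt0 //.
  rewrite -[X in X <= _](powRr0 L); apply: ler_powR => //.
  by rewrite invr_ge0 ltW.
exists t; split => //; first by lra.
have sL : L `^ 2^-1 <= t.
  rewrite powR12_sqrt; last by lra.
  rewrite /t ler_sqrt; lra.
have tmu : L `^ beta <= t * mu.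
  rewrite /beta /mu powRD; last by rewrite gt_eqF ?implybT.
  by rewrite ler_wpM2r // ltW.
set u := L `^ eps.
have u0 : 0 < u by apply: powR_gt0.
have ub : L `^ beta = u * u.
  have -> : beta = eps + eps by rewrite /eps; field.
  rewrite powRD //; apply/implyP => _; by rewrite gt_eqF.
have Mu : M <= u.
  have -> : M = (M `^ eps^-1) `^ eps.
    by rewrite -powRrM mulVf ?gt_eqF // powRr1 // ltW.
  rewrite /u; apply: ge0_ler_powR; last exact: LM.
  - exact: ltW.
  - by rewrite nnegrE powR_ge0.
  - by rewrite nnegrE ltW.
have lnu : ln u = eps * ln L by rewrite /u ln_powR.
have lnuu := ln_sublinear u0.
have Meps : M * eps = 3 by rewrite /M /eps; field; rewrite gt_eqF.
have l3 : 3 * ln L <= t * mu.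
  have h1 : 3 * ln L = M * ln u by rewrite lnu mulrA Meps.
  have h2 : M * ln u <= M * u by rewrite ler_pM2l //; lra.
  have h3 : M * u <= u * u by nra.
  lra.
have X3 : L ^+ 3 <= expR (t * mu).
  rewrite -(lnK (x := L ^+ 3)) ?posrE ?exprn_gt0 // ler_expR lnXn //.
  by rewrite -mulr_natl.
set d := t^-1.
have dt : d * t = 1 by rewrite /d mulVf // gt_eqF //; lra.
have d0 : 0 < d by rewrite /d invr_gt0; lra.
have d1 : d <= 1 by rewrite /d invf_le1; lra.
have dL : (2 * L)^-1 <= d.
  by rewrite /d lef_pV2 ?posrE //; lra.
have Z : expR (- t ^+ 2 / 2) * expR (t * mu) * expR (-2) <=
         expR (- (t + d - mu) ^+ 2 / 2).
  rewrite -!expRD ler_expR.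
  have : (d - mu) ^+ 2 <= 1 by nra.
  nra.
rewrite pdf1E texp in Z *.
set P := normal_peak 1.
have P0 : 0 < P by apply: normal_peak_gt0; rewrite oner_neq0.
set Y := expR (-2).
have Y0 : 0 < Y := expR_gt0 _.
set a := A / (expR L * L ^+ 2).
have a0 : 0 < a by rewrite /a divr_gt0 // mulr_gt0 ?expR_gt0 ?exprn_gt0.
have -> : P * Y * A / 2 / expR L = (P * Y * a) * (L ^+ 3 * (2 * L)^-1).
  rewrite /a; field; rewrite !gt_eqF ?expR_gt0 //.
apply: (@le_trans _ _ ((P * Y * a) * (expR (t * mu) * d))).
  rewrite ler_pM2l; last by rewrite mulr_gt0 // mulr_gt0.
  have L3 : 0 <= L ^+ 3 by rewrite exprn_ge0 // ltW.
  have h1 : L ^+ 3 * (2 * L)^-1 <= L ^+ 3 * d by rewrite ler_wpM2l.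
  have h2 : L ^+ 3 * d <= expR (t * mu) * d by rewrite ler_wpM2r // ltW.
  exact: le_trans h1 h2.
have -> : P * Y * a * (expR (t * mu) * d) = d * (P * (a * expR (t * mu) * Y)) by ring.
by rewrite ler_pM2l // ler_pM2l.
Qed.

Lemma prod_le (R : realType) (s : seq nat) (x : nat -> \bar R) (y : nat -> R) :
  (forall j, j \in s -> (0 <= x j)%E /\ (x j <= (expR (y j))%:E)%E) ->
  (\prod_(j <- s) x j <= (expR (\sum_(j <- s) y j))%:E)%E.
Proof.
elim: s => [|a s IH] H.
  by rewrite !big_nil expR0.
rewrite !big_cons expRD EFinM.
have [Ha1 Ha2] := H a (mem_head a s).
apply: lee_pmul => //.
  rewrite big_seq; apply: prode_ge0 => j js.
  by case: (H j) => //; rewrite in_cons js orbT.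
apply: IH => j js; apply: H; by rewrite in_cons js orbT.
Qed.

Lemma ln_step (R : realType) (x : R) : 0 < x -> ln (x + 1) - ln x <= x^-1.
Proof.
move=> x0.
rewrite -ln_div ?posrE //; last lra.
have -> : (x + 1) / x = 1 + x^-1 by field; rewrite gt_eqF.
apply: le_ln1Dx.
have : 0 < x^-1 by rewrite invr_gt0.
lra.
Qed.

Lemma harm_lb (R : realType) (K n : nat) : (0 < K)%N ->
  ln ((K + n)%:R : R) - ln (K%:R : R) <= \sum_(j <- iota K n) (j%:R : R)^-1.
Proof.
move=> K0; elim: n => [|n IH].
  by rewrite addn0 subrr big_nil.
rewrite -addn1 iotaD big_cat big_seq1 /=.
have h := @ln_step R (K + n)%:R.
have hp : (0 : R) < (K + n)%:R by rewrite ltr0n addn_gt0 K0.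
move: (h hp); rewrite addnA (natrD _ (K + n) 1).
lra.
Qed.

Theorem lemma4 (R : realType) (d : measure_display) (T : measurableType d)
  (P : probability T R) (alpha c : R) (mu : nat -> R)
  (Z : nat -> {RV P >-> R}) :
  0 < alpha < 1 ->
  2 < c ->
  (forall k : nat, (1 < k)%N -> mu k = powR (ln (k%:R : R)) (- c^-1)) ->
  (forall (k : nat) (A : set R), measurable A ->
     distribution P (Z k) A = normal_prob (mu k) 1 A) ->
  mutually_independent P Z ->
  P [set w | exists k : nat, (1 <= k)%N /\
                1 - Phi (Z k w) <= bonf_alpha alpha k] = 1%E.
Proof.
move=> /andP[a0 a1] c2 Hmu Hdist Hind.
set A := bonf_const alpha.
have A0 : 0 < A := @bonf_const_gt0 R alpha a0.
set Mc := (6 / (2^-1 - c^-1)) `^ ((2^-1 - c^-1) / 2)^-1.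
set L0 := Num.max (Num.max 1 A) (Num.max (1 - ln A) Mc).
have L1 : 1 <= L0 by rewrite /L0 !le_max lexx.
have LA : A <= L0 by rewrite /L0 !le_max lexx !orbT.
have LlnA : 1 - ln A <= L0 by rewrite /L0 !le_max lexx !orbT.
have LM : Mc <= L0 by rewrite /L0 !le_max lexx !orbT.
set K := maxn 2 (Num.trunc (expR L0)).+1.
set C := normal_peak 1 * expR (-2) * A / 2.
have C0 : 0 < C.
  rewrite /C !divr_gt0 // mulr_gt0 // mulr_gt0 ?expR_gt0 //.
  by apply: normal_peak_gt0; rewrite oner_neq0.
have key : forall k, (K <= k)%N -> exists t, [/\ 0 <= t,
    expR (- t ^+ 2 / 2) <= bonf_alpha alpha k &
    ((C / k%:R)%:E <= normal_prob (mu k) 1 `[t, +oo[)%E].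
  move=> k Kk.
  have k2 : (2 <= k)%N := leq_trans (leq_maxl _ _) Kk.
  have kL : expR L0 < (k%:R : R).
    apply: (lt_le_trans (truncnS_gt _)); rewrite ler_nat.
    exact: leq_trans (leq_maxr _ _) Kk.
  have k0 : 0 < (k%:R : R) by apply: lt_trans kL; exact: expR_gt0.
  set L := ln (k%:R : R).
  have LL0 : L0 <= L.
    by rewrite -(expRK L0) /L ler_ln ?posrE ?expR_gt0 // ltW.
  have kE : (k%:R : R) = expR L by rewrite /L lnK.
  have hL1 : 1 <= L by exact: le_trans L1 LL0.
  have hLA : A <= L by exact: le_trans LA LL0.
  have hLl : 1 - ln A <= L by exact: le_trans LlnA LL0.
  have hLM : Mc <= L by exact: le_trans LM LL0.
  have := @core R A c L A0 c2 hL1 hLA hLl hLM.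
  case=> t [t1 mut texp tb].
  exists t; split.
  - lra.
  - by rewrite /bonf_alpha k2 -/A texp -kE.
  - rewrite Hmu //.
    have t0 : 0 < t^-1 by rewrite invr_gt0; lra.
    apply: (le_trans _ (@normal_lb R _ _ _ mut t0)).
    by rewrite kE.
have [tf Htf] : exists tf : nat -> R, forall k, (K <= k)%N -> [/\ 0 <= tf k,
    expR (- tf k ^+ 2 / 2) <= bonf_alpha alpha k &
    ((C / k%:R)%:E <= normal_prob (mu k) 1 `[tf k, +oo[)%E].
  have := @choice nat R (fun k t => (K <= k)%N -> [/\ 0 <= t,
    expR (- t ^+ 2 / 2) <= bonf_alpha alpha k &
    ((C / k%:R)%:E <= normal_prob (mu k) 1 `[t, +oo[)%E]).
  case.
    move=> k; case: (leqP K k) => Kk.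
      by have [t ht] := key k Kk; exists t.
    by exists 0.
  by move=> f hf; exists f.
have K2 : (2 <= K)%N := leq_maxl _ _.
set S := [set w | exists k : nat, (1 <= k)%N /\ 1 - Phi (Z k w) <= bonf_alpha alpha k].
have mS : measurable S.
  have -> : S = \bigcup_k [set w | (1 <= k)%N /\ 1 - Phi (Z k w) <= bonf_alpha alpha k].
    by apply/seteqP; split => w /=; [case=> k hk; exists k | case=> k _ hk; exists k].
  apply: bigcupT_measurable => k.
  have [k1|k0] : (1 <= k)%N \/ k = 0%N by case: k; [right | left].
  - have -> : [set w | (1 <= k)%N /\ 1 - Phi (Z k w) <= bonf_alpha alpha k] =
              Z k @^-1` (Phi @^-1` `[1 - bonf_alpha alpha k, +oo[).
      apply/seteqP; split => w /=; rewrite in_itv /= andbT.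
        by case=> _ h; lra.
      by move=> h; split => //; lra.
    apply: measurable_funPTI.
    have mPhi : measurable_fun setT (@Phi R) :=
      nondecreasing_measurable measurableT (@Phi_nd R).
    rewrite -[X in measurable X]setTI.
    by apply: mPhi => //; exact: measurable_itv.
  - subst k.
    have -> : [set w | (1 <= 0)%N /\ 1 - Phi (Z 0%N w) <= bonf_alpha alpha 0] = set0.
      by apply/seteqP; split => w //= [].
    exact: measurable0.
rewrite -/S -(setCK S) probability_setC; last exact: measurableC.
suff -> : P (~` S) = 0%E by rewrite sube0.
apply/eqP; rewrite eq_le measure_ge0 andbT.
apply/lee_addgt0Pr => e e0; rewrite add0e.
set n := (Num.trunc (expR (ln (K%:R : R) - ln e / C))).+1.
set J := iota K n.
have mB : forall j, measurable (~` `[tf j, +oo[ : set R).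
  by move=> j; apply: measurableC; exact: measurable_itv.
have sub : ~` S `<=` \bigcap_(j in [set` J]) (Z j @^-1` (~` `[tf j, +oo[)).
  move=> w nSw j /=; rewrite mem_iota => /andP[Kj _].
  have [t0 tb _] := Htf j Kj.
  move=> tz; apply: nSw; exists j; split.
    exact: leq_trans (ltnW K2) Kj.
  move: tz; rewrite /= in_itv /= andbT => tz.
  have := @Phi_lb R _ t0; have := @Phi_mono R _ _ tz; lra.
have HI := Hind J (fun j => ~` `[tf j, +oo[) (iota_uniq _ _) (fun j _ => mB j).
rewrite /= in HI.
have H1 : (P (~` S) <= \prod_(j <- J) P (Z j @^-1` (~` `[tf j, +oo[)))%E.
  rewrite -HI; apply: le_measure sub.
  - by rewrite inE; apply: measurableC.
  - rewrite inE; apply: bigcap_measurableType => j _.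
    exact: measurable_funPTI.
apply: (le_trans H1).
apply: (le_trans (@prod_le R J _ (fun j => - (C / j%:R)) _)).
  move=> j; rewrite mem_iota => /andP[Kj _]; split; first exact: measure_ge0.
  have [_ _ hq] := Htf j Kj.
  have E : P (Z j @^-1` (~` `[tf j, +oo[)) = normal_prob (mu j) 1 (~` `[tf j, +oo[)
    := Hdist j _ (mB j).
  have E2 : normal_prob (mu j) 1 (~` `[tf j, +oo[) = (1 - normal_prob (mu j) 1 `[tf j, +oo[)%E
    := @probability_setC _ _ R (normal_prob (mu j) 1) _ (measurable_itv _).
  have hf := @prob_fin _ _ _ (normal_prob (mu j) 1) _ (measurable_itv `[tf j, +oo[).
  set q := fine (normal_prob (mu j) 1 `[tf j, +oo[) in hf.
  have qE : normal_prob (mu j) 1 `[tf j, +oo[ = q%:E by rewrite /q fineK.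
  rewrite E E2 qE -EFinB lee_fin.
  rewrite qE lee_fin in hq.
  have := expR_ge1Dx (- (C / j%:R)); lra.
rewrite lee_fin sumrN -mulr_sumr.
have K0 : (0 < K)%N := leq_trans (isT : (0 < 2)%N) K2.
have hH := @harm_lb R K n K0.
have nb : expR (ln (K%:R : R) - ln e / C) < n%:R := truncnS_gt _.
have Kn : (n%:R : R) <= (K + n)%:R by rewrite ler_nat leq_addl.
have Knp : (0 : R) < (K + n)%:R by rewrite ltr0n addn_gt0 K0.
have lnKn : ln (K%:R : R) - ln e / C <= ln ((K + n)%:R : R).
  rewrite -[X in X <= _](expRK) ler_ln ?posrE ?expR_gt0 //.
  exact: ltW (lt_le_trans nb Kn).
rewrite -(lnK (x := e)) ?posrE // ler_expR.
set H := \sum_(j <- J) (j%:R : R)^-1.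
set q := ln e / C.
have lq : ln e = C * q by rewrite /q; field; rewrite gt_eqF.
have hq : - q <= H.
  move: hH lnKn; rewrite -/J -/H -/q => h1 h2; apply: (le_trans _ h1); rewrite lerBrDr. lra.
have := ler_wpM2l (ltW C0) hq.
rewrite lq; lra.
Qed.
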